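(* Let $\lambda_A:{\mathcal U}_A^{\ge0}\otimes{\mathcal U}_q^{c_m}\to{\mathcal U}_A^{\ge0}$ be the linear map $\lambda_A(u\otimes v)=\mathrm{ad}(\pi_A(u))(v)$. Then $\mathrm{Im}(\lambda_A)\subseteq{\mathcal U}_q^{c_m}$, and $\lambda_A$ endows ${\mathcal U}_q^{c_m}$ with the structure of a left ${\mathcal U}_A^{\ge0}$-module algebra.
   Context: $k$ algebraically closed of characteristic $0$, $q\in k^\times$ not a root of unity, $\hat q=q-q^{-1}$, $m>1$, $[u,v]=uv-q^{-1}vu$. $Q(A_m)$ is the lattice of $(a_1,\dots,a_{m+1})\in\mathbb Z^{m+1}$ with $\sum a_i=0$, standard inner product, simple roots $\alpha_i=e_i-e_{i+1}$, reflections $s_i$. ${\mathcal U}_q(\mathfrak{sl}_{m+1})$ is generated by $E_i,F_i$ ($1\le i\le m$), $K_\mu$ with relations $K_0=1$, $K_\mu K_\lambda=K_{\mu+\lambda}$, $K_\mu E_i=q^{\langle\mu,\alpha_i\rangle}E_iK_\mu$, $K_\mu F_i=q^{-\langle\mu,\alpha_i\rangle}F_iK_\mu$, $E_iE_j=E_jE_i$, $F_iF_j=F_jF_i$ if $\langle\alpha_i,\alpha_j\rangle\in\{0,2\}$, $E_i[E_i,E_j]=q[E_i,E_j]E_i$, $F_i[F_i,F_j]=q[F_i,F_j]F_i$ if $\langle\alpha_i,\alpha_j\rangle=-1$, $E_iF_j-F_jE_i=\delta_{ij}(K_{\alpha_i}-K_{-\alpha_i})/\hat q$; Hopf structure $\Delta(E_i)=K_{-\alpha_i}\otimes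 E_i+E_i\otimes1$, $\Delta(K_\mu)=K_\mu\otimes K_\mu$, $\Delta(F_i)=1\otimes F_i+F_i\otimes K_{\alpha_i}$, $S(E_i)=-K_{\alpha_i}E_i$, $S(K_\mu)=K_{-\mu}$, $\epsilon(E_i)=0$, $\epsilon(K_\mu)=1$; Lusztig automorphisms $T_iK_\mu=K_{s_i\mu}$, $T_iE_i=-F_iK_{\alpha_i}$, $T_iE_j=E_j$ if $\langle\alpha_i,\alpha_j\rangle=0$, $T_iE_j=E_iE_j-q^{-1}E_jE_i$ if $\langle\alpha_i,\alpha_j\rangle=-1$. ${\mathcal U}_q^{c_m}$ is the subalgebra generated by $z_j=T_1\cdots T_{j-1}E_j$ ($1\le j\le m$) for $c_m=s_1\cdots s_m$. ${\mathcal U}_A^{\ge0}$ is the Hopf subalgebra generated by the $E_i$ and $K_\mu$. $\pi_A:{\mathcal U}_A^{\ge0}\to{\mathcal U}_A^{\ge0}$ is the algebra map with $\pi_A(E_1)=0$, $\pi_A(E_i)=E_i$ ($1<i\le m$), $\pi_A(K_\mu)=K_\mu$. $\mathrm{ad}(h)(u)=\sum h_{(1)}uS(h_{(2)})$. *)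

(* Defs.v *)
From HB Require Import structures.
From mathcomp Require Import all_boot all_order all_algebra.
Set Implicit Arguments. Unset Strict Implicit. Unset Printing Implicit Defensive.
Import Order.TTheory GRing.Theory Num.Theory.
Local Open Scope ring_scope.

Definition QA (m : nat) := {v : 'rV[int]_m.+1 | \sum_i v ord0 i == 0}.

Lemma lat0_proof (m : nat) : \sum_(i < m.+1) (0 : 'rV[int]_m.+1) ord0 i == 0.
Proof. by rewrite big1 // => i _; rewrite mxE. Qed.

Definition lat0 (m : nat) : QA m := exist _ 0 (lat0_proof m).
(* projection of a vector to the lattice (used only on vectors that lie in it) *)
Definition latof (m : nat) (v : 'rV[int]_m.+1) : QA m := insubd (lat0 m) v.
Definition latadd (m : nat) (x y : QA m) : QA m := latof (val x + val y).
Definition latopp (m : nat) (x : QA m) : QA m := latof (- val x).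
Definition lpair (m : nat) (x y : QA m) : int := \sum_i val x ord0 i * val y ord0 i.
(* simple root alpha_i = e_i - e_{i+1}  (index i : 'I_m stands for the paper's i+1) *)
Definition alpha (m : nat) (i : 'I_m) : QA m :=
  latof (delta_mx ord0 (widen_ord (leqnSn m) i) - delta_mx ord0 (lift ord0 i)).
Definition srefl (m : nat) (i : 'I_m) (mu : QA m) : QA m :=
  latof (val mu - val (alpha i) *~ lpair mu (alpha i)).

Definition alg_hom (k : fieldType) (A B : algType k) (f : A -> B) : Prop :=
  (forall a x y, f (a *: x + y) = a *: f x + f y) /\ f 1 = 1 /\
  (forall x y, f (x * y) = f x * f y).

Inductive in_alg_gen (k : fieldType) (A : algType k) (G : A -> Prop) : A -> Prop :=
| iag_gen x : G x -> in_alg_gen G x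
| iag_one : in_alg_gen G 1
| iag_lin a x y : in_alg_gen G x -> in_alg_gen G y -> in_alg_gen G (a *: x + y)
| iag_mul x y : in_alg_gen G x -> in_alg_gen G y -> in_alg_gen G (x * y).

Definition qbr (k : fieldType) (A : algType k) (q : k) (u v : A) : A :=
  u * v - q^-1 *: (v * u).

Definition Uq_rels (k : fieldType) (q : k) (m : nat) (B : algType k)
    (E F : 'I_m -> B) (K : QA m -> B) : Prop :=
  K (lat0 m) = 1 /\
  (forall mu la, K mu * K la = K (latadd mu la)) /\
  (forall mu i, K mu * E i = q ^ lpair mu (alpha i) *: (E i * K mu)) /\
  (forall mu i, K mu * F i = q ^ (- lpair mu (alpha i)) *: (F i * K mu)) /\
  (forall i j, (lpair (alpha i) (alpha j) == 0) || (lpair (alpha i) (alpha j) == 2) ->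
     E i * E j = E j * E i /\ F i * F j = F j * F i) /\
  (forall i j, lpair (alpha i) (alpha j) = -1 ->
     E i * qbr q (E i) (E j) = q *: (qbr q (E i) (E j) * E i) /\
     F i * qbr q (F i) (F j) = q *: (qbr q (F i) (F j) * F i)) /\
  (forall i j, E i * F j - F j * E i =
     if i == j then (q - q^-1)^-1 *: (K (alpha i) - K (latopp (alpha i))) else 0).

(* U is (a copy of) U_q(sl_{m+1}): the algebra presented by these generators/relations *)
Definition is_Uq (k : fieldType) (q : k) (m : nat) (U : algType k)
    (E F : 'I_m -> U) (K : QA m -> U) : Prop :=
  Uq_rels q E F K /\
  forall (B : algType k) (E' F' : 'I_m -> B) (K' : QA m -> B),
    Uq_rels q E' F' K' ->
    exists f : U -> B,
      [/\ alg_hom f, (forall i, f (E i) = E' i), (forall i, f (F i) = F' i),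
          (forall mu, f (K mu) = K' mu) &
          (forall g : U -> B, alg_hom g -> (forall i, g (E i) = E' i) ->
             (forall i, g (F i) = F' i) -> (forall mu, g (K mu) = K' mu) ->
             forall x, g x = f x)].

(* T together with i1 a = a (x) 1, i2 b = 1 (x) b is the tensor product algebra U (x) U *)
Definition is_tensor (k : fieldType) (U T : algType k) (i1 i2 : U -> T) : Prop :=
  alg_hom i1 /\ alg_hom i2 /\ (forall a b, i1 a * i2 b = i2 b * i1 a) /\
  forall (V : lmodType k) (f : U -> U -> V),
    (forall a x y z, f (a *: x + y) z = a *: f x z + f y z) ->
    (forall a x y z, f z (a *: x + y) = a *: f z x + f z y) ->
    exists g : T -> V,
      [/\ (forall a s t, g (a *: s + t) = a *: g s + g t),
          (forall a b, g (i1 a * i2 b) = f a b) &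
          (forall g' : T -> V, (forall a s t, g' (a *: s + t) = a *: g' s + g' t) ->
             (forall a b, g' (i1 a * i2 b) = f a b) -> forall t, g' t = g t)].

(* Hopf structure (as much as is specified in the paper) *)
Definition Uq_coproduct (k : fieldType) (m : nat) (U T : algType k)
    (E F : 'I_m -> U) (K : QA m -> U) (i1 i2 : U -> T) (Delta : U -> T) : Prop :=
  alg_hom Delta /\
  (forall i, Delta (E i) = i1 (K (latopp (alpha i))) * i2 (E i) + i1 (E i)) /\
  (forall mu, Delta (K mu) = i1 (K mu) * i2 (K mu)) /\
  (forall i, Delta (F i) = i2 (F i) + i1 (F i) * i2 (K (alpha i))).

Definition Uq_antipode (k : fieldType) (m : nat) (U : algType k)
    (E : 'I_m -> U) (K : QA m -> U) (S : U -> U) : Prop :=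
  (forall a x y, S (a *: x + y) = a *: S x + S y) /\ S 1 = 1 /\
  (forall x y, S (x * y) = S y * S x) /\
  (forall i, S (E i) = - (K (alpha i) * E i)) /\
  (forall mu, S (K mu) = K (latopp mu)).

Definition Uq_counit (k : fieldType) (m : nat) (U : algType k)
    (E : 'I_m -> U) (K : QA m -> U) (eps : U -> k) : Prop :=
  (forall a x y, eps (a *: x + y) = a * eps x + eps y) /\ eps 1 = 1 /\
  (forall x y, eps (x * y) = eps x * eps y) /\
  (forall i, eps (E i) = 0) /\ (forall mu, eps (K mu) = 1).

Definition lusztig (k : fieldType) (q : k) (m : nat) (U : algType k)
    (E F : 'I_m -> U) (K : QA m -> U) (Tl : 'I_m -> U -> U) : Prop :=
  forall i, alg_hom (Tl i) /\
    (forall mu, Tl i (K mu) = K (srefl i mu)) /\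
    Tl i (E i) = - (F i * K (alpha i)) /\
    (forall j, lpair (alpha i) (alpha j) = 0 -> Tl i (E j) = E j) /\
    (forall j, lpair (alpha i) (alpha j) = -1 -> Tl i (E j) = E i * E j - q^-1 *: (E j * E i)).

(* z_j = T_1 ... T_{j-1} E_j  (0-based: T_0 ... T_{j-1} E_j) *)
Definition zgen (k : fieldType) (m : nat) (U : algType k)
    (E : 'I_m -> U) (Tl : 'I_m -> U -> U) (j : 'I_m) : U :=
  foldr (fun i x => Tl i x) (E j) [seq i <- enum 'I_m | (val i < val j)%N].

Definition Uge0 (k : fieldType) (m : nat) (U : algType k)
    (E : 'I_m -> U) (K : QA m -> U) : U -> Prop :=
  in_alg_gen (fun x => (exists i, x = E i) \/ (exists mu, x = K mu)).

Definition Ucm (k : fieldType) (m : nat) (U : algType k)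
    (E : 'I_m -> U) (Tl : 'I_m -> U -> U) : U -> Prop :=
  in_alg_gen (fun x => exists j, x = zgen E Tl j).

(* pi_A : U^{>=0} -> U^{>=0}, algebra map killing E_1 (0-based index 0) *)
Definition piA_spec (k : fieldType) (m : nat) (U : algType k)
    (E : 'I_m -> U) (K : QA m -> U) (pi : U -> U) : Prop :=
  (forall a x y, Uge0 E K x -> Uge0 E K y -> pi (a *: x + y) = a *: pi x + pi y) /\
  (forall x y, Uge0 E K x -> Uge0 E K y -> pi (x * y) = pi x * pi y) /\
  pi 1 = 1 /\
  (forall i, pi (E i) = if val i == 0%N then 0 else E i) /\
  (forall mu, pi (K mu) = K mu).

(* adT u : U (x) U -> U is the linear map a (x) b |-> a u S(b);
   then ad(h)(u) = adT u (Delta h) = sum h_(1) u S(h_(2)) *)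
Definition adT_spec (k : fieldType) (U T : algType k) (i1 i2 : U -> T) (S : U -> U)
    (adT : U -> T -> U) : Prop :=
  forall u, (forall a s t, adT u (a *: s + t) = a *: adT u s + adT u t) /\
            (forall a b, adT u (i1 a * i2 b) = a * u * S b).

(* Main.v *)
Require Import Defs.
From HB Require Import structures.
From mathcomp Require Import all_boot all_order all_algebra.
From mathcomp Require Import ring zify.
Import Order.TTheory GRing.Theory Num.Theory.
Set Implicit Arguments. Unset Strict Implicit. Unset Printing Implicit Defensive.
Local Open Scope ring_scope.

Section LC.
Variables (k : fieldType) (V : lmodType k).
Inductive lexp := LAtom of nat | LAdd of lexp & lexp | LOpp of lexp | LScale of k & lexp | LZero.
Fixpoint leval (ms : seq V) (e : lexp) : V :=
  match e with
  | LAtom i => nth 0 ms i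
  | LAdd a b => leval ms a + leval ms b
  | LOpp a => - leval ms a
  | LScale c a => c *: leval ms a
  | LZero => 0
  end.
Fixpoint lcoef (e : lexp) (i : nat) : k :=
  match e with
  | LAtom j => if i == j then 1 else 0
  | LAdd a b => lcoef a i + lcoef b i
  | LOpp a => - lcoef a i
  | LScale c a => c * lcoef a i
  | LZero => 0
  end.
Lemma leval_sum ms e : leval ms e = \sum_(i < size ms) lcoef e i *: nth 0 ms i.
Proof.
elim: e => [j|a IHa b IHb|a IHa|c a IHa|] /=.
- case: (ltnP j (size ms)) => hj.
    rewrite (bigD1 (Ordinal hj)) //= eqxx scale1r big1 ?addr0 // => i /negbTE.
    by rewrite -val_eqE /= => ->; rewrite scale0r.
  by rewrite nth_default // big1 // => i _; rewrite (_ : (i == j :> nat) = false) ?scale0r //;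
     apply/negbTE; rewrite neq_ltn (leq_trans (ltn_ord i) hj).
- by rewrite IHa IHb -big_split /=; apply: eq_bigr => i _; rewrite scalerDl.
- by rewrite IHa -sumrN; apply: eq_bigr => i _; rewrite scaleNr.
- by rewrite IHa scaler_sumr; apply: eq_bigr => i _; rewrite scalerA.
- by rewrite big1 // => i _; rewrite scale0r.
Qed.
Lemma lcomb_eq ms e1 e2 : (forall i, (i < size ms)%N -> lcoef e1 i = lcoef e2 i) ->
  leval ms e1 = leval ms e2.
Proof. by move=> H; rewrite !leval_sum; apply: eq_bigr => i _; rewrite H. Qed.
Fixpoint lc_allP (n : nat) (P : nat -> Prop) : Prop :=
  match n with 0 => True | n'.+1 => lc_allP n' P /\ P n' end.
Lemma allP_sound n P : lc_allP n P -> forall i, (i < n)%N -> P i.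
Proof.
elim: n => [//|n IH] /= [H1 H2] i; rewrite ltnS leq_eqVlt; case/orP => [/eqP -> //|].
exact: IH.
Qed.
Lemma lcomb_eq2 ms e1 e2 : lc_allP (size ms) (fun i => lcoef e1 i = lcoef e2 i) ->
  leval ms e1 = leval ms e2.
Proof. by move=> H; apply: lcomb_eq; apply: allP_sound. Qed.
End LC.
Arguments leval {k V}. Arguments LAdd {k}. Arguments LOpp {k}. Arguments LScale {k}.

Ltac lc_find t ms :=
  lazymatch ms with
  | (?h :: ?r)%SEQ => match constr:(tt) with
                      | _ => let _ := constr:(@erefl _ t : t = h) in constr:(0%N)
                      | _ => let n := lc_find t r in constr:(n.+1) end
  end.
Ltac lc_len ms := lazymatch ms with | nil => constr:(0%N) | (_ :: ?r)%SEQ => let n := lc_len r in constr:(n.+1) end.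
Ltac lc_app ms t := lazymatch ms with | nil => constr:((t :: nil)%SEQ) | (?h :: ?r)%SEQ => let r' := lc_app r t in constr:((h :: r')%SEQ) end.
Ltac lc_reify K t ms :=
  lazymatch t with
  | (?x + ?y)%R => lazymatch lc_reify K x ms with (?a, ?ms1) =>
                   lazymatch lc_reify K y ms1 with (?b, ?ms2) => constr:((LAdd a b, ms2)) end end
  | (- ?x)%R => lazymatch lc_reify K x ms with (?a, ?ms1) => constr:((LOpp a, ms1)) end
  | (?c *: ?x)%R => lazymatch lc_reify K x ms with (?a, ?ms1) => constr:((LScale c a, ms1)) end
  | 0%R => constr:((LZero K, ms))
  | _ => match constr:(tt) with
         | _ => let n := lc_find t ms in constr:((LAtom K n, ms))
         | _ => let n := lc_len ms in let ms' := lc_app ms t in constr:((LAtom K n, ms'))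
         end
  end.
Ltac lincomb K :=
  lazymatch goal with
  | |- @eq ?V ?l ?r =>
    lazymatch lc_reify K l (@nil V) with (?el, ?ms1) =>
    lazymatch lc_reify K r ms1 with (?er, ?ms) =>
    change (leval ms el = leval ms er); apply: lcomb_eq2;
    simpl; repeat split; try ring end end
  end.
Section NC.
Variables (k : fieldType) (A : algType k) (q : k).
Hypothesis hq : q != 0.
Hypothesis he : q + q^-1 != 0.

Ltac ncsimp := repeat progress rewrite ?(mulrDr, mulrDl, mulrBr, mulrBl, mulrN, mulNr) -?scalerAl -?scalerAr ?scalerA ?mulrA.

Definition RS (x y : A) := x*x*y + y*x*x = (q + q^-1) *: (x*y*x).

Lemma RS_of_serre x y : x * qbr q x y = q *: (qbr q x y * x) -> RS x y.
Proof.
rewrite /qbr mulrBr mulrBl -scalerAr -scalerAl scalerBr scalerA mulfV // scale1r !mulrA => H'.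
rewrite /RS -[x*x*y](subrK (q^-1*:(x*y*x))) H' scalerDl.
by rewrite addrAC subrK.
Qed.

Lemma RS_lin x a y1 y2 : RS x y1 -> RS x y2 -> RS x (a*:y1 + y2).
Proof.
rewrite /RS => H1 H2.
ncsimp.
rewrite scalerDr scalerA mulrC -scalerA -H1 -H2 scalerDr.
by rewrite addrACA.
Qed.

Lemma cmL {x w : A} (C : x*w = w*x) (y : A) : x*(w*y) = w*(x*y).
Proof. by rewrite mulrA C -mulrA. Qed.
Lemma cmR {x w : A} (C : x*w = w*x) (y : A) : y*x*w = y*w*x.
Proof. by rewrite -mulrA C mulrA. Qed.

Lemma RS_l x w y : x*w = w*x -> RS x y -> RS x (w*y).
Proof.
rewrite /RS => C H.
have e1 : x*x*(w*y) = w*(x*x*y) by rewrite -mulrA (cmL C) (cmL C) !mulrA.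
have e2 : x*(w*y)*x = w*(x*y*x) by rewrite (cmL C) -!mulrA.
have e3 : w*y*x*x = w*(y*x*x) by rewrite -!mulrA.
by rewrite e1 e2 e3 -mulrDr H -scalerAr.
Qed.

Lemma RS_r x w y : x*w = w*x -> RS x y -> RS x (y*w).
Proof.
rewrite /RS => C H.
have e1 : x*x*(y*w) = (x*x*y)*w by rewrite !mulrA.
have e2 : y*w*x*x = (y*x*x)*w by rewrite (cmR C) (cmR C).
have e3 : x*(y*w)*x = (x*y*x)*w by rewrite mulrA (cmR C).
by rewrite e1 e2 e3 -mulrDl H -scalerAl.
Qed.

Lemma RS0 x : RS x 0.
Proof. by rewrite /RS !(mulr0, mul0r) scaler0 addr0. Qed.

Lemma RS_scale x a y : RS x y -> RS x (a*:y).
Proof. by move=> H; rewrite -[a*:y]addr0; apply: RS_lin => //; apply: RS0. Qed.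

Lemma RS_qb x w y : x*w = w*x -> RS x y -> RS x (qbr q w y).
Proof.
move=> C H; rewrite /qbr -[w*y]scale1r -scaleNr.
by apply: RS_lin; [exact: RS_l | apply: RS_scale; exact: RS_r].
Qed.

Lemma RS_c x y : RS x y -> x * qbr q y x = q^-1 *: (qbr q y x * x).
Proof.
rewrite /RS /qbr => H. rewrite mulrBr mulrBl -scalerAr -scalerAl scalerBr scalerA !mulrA.
have -> : x*x*y = (q + q^-1) *: (x*y*x) - y*x*x by rewrite -H addrK.
rewrite scalerBr scalerA opprB addrA addrAC.
have -> : x * y * x - (q^-1 * (q + q^-1)) *: (x * y * x) = - ((q^-1 * q^-1) *: (x*y*x)).
  rewrite -{1}[x*y*x]scale1r -scalerBl -scaleNr; congr (_ *: _).
  by rewrite mulrDr mulVf // opprD addrA subrr sub0r.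
by rewrite addrC.
Qed.

Lemma key_d a b w : w*b = b*w -> RS a b -> RS a w ->
  a * qbr q (qbr q w a) b = qbr q (qbr q w a) b * a.
Proof.
move=> C Hb Hw; rewrite /RS in Hb Hw.
have Sb : b*a*a = (q+q^-1)*:(a*b*a) - a*a*b by rewrite -Hb addrC addKr.
have Sw : w*a*a = (q+q^-1)*:(a*w*a) - a*a*w by rewrite -Hw addrC addKr.
have e1 : w*a*a*b = (q+q^-1)*:(a*w*a*b) - a*a*b*w by rewrite Sw mulrBl -scalerAl (cmR C).
have e2 : b*a*a*w = (q+q^-1)*:(a*b*a*w) - a*a*b*w by rewrite Sb mulrBl -scalerAl.
have K0 : a*w*a*b = w*a*b*a - b*a*w*a + a*b*a*w.
  have E1 : w*(b*a*a) = b*(w*a*a) by rewrite !mulrA C.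
  rewrite Sb Sw !mulrBr -!scalerAr !mulrA e1 e2 in E1.
  apply: (@scalerI _ _ (q+q^-1)) => //.
  have -> : (q+q^-1)*:(a*w*a*b) = (q+q^-1)*:(w*a*b*a) - ((q + q^-1) *: (w * a * b * a) - ((q + q^-1) *: (a * w * a * b) - a * a * b * w))
     + a*a*b*w by lincomb k.
  rewrite E1. lincomb k.
have m1 : a*w*b*a = a*b*w*a by rewrite (cmR C).
have m2 : b*w*a*a = (q+q^-1)*:(b*a*w*a) - ((q+q^-1)*:(a*b*a*w) - a*a*b*w).
  by rewrite -e2 -(mulrA b w) -(mulrA b (w*a)) Sw mulrBr -scalerAr !mulrA.
have m3 : a*a*w*b = a*a*b*w by rewrite (cmR C).
rewrite /qbr. ncsimp. rewrite K0 m1 m2 m3. lincomb k. all: field. all: exact hq.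
Qed.

End NC.

Definition lin (k : fieldType) (V W : lmodType k) (f : V -> W) :=
  forall a x y, f (a *: x + y) = a *: f x + f y.
Arguments lin {k V W}.

Section Lin.
Variables (k : fieldType) (V W : lmodType k) (f : V -> W).
Hypothesis hf : lin f.
Lemma lin0 : f 0 = 0.
Proof. by have := hf 1 0 0; rewrite scaler0 addr0 scale1r => H; apply: (addrI (f 0)); rewrite addr0 -H. Qed.
Lemma linD x y : f (x + y) = f x + f y.
Proof. by have := hf 1 x y; rewrite !scale1r. Qed.
Lemma linZ a x : f (a *: x) = a *: f x.
Proof. by rewrite -[a *: x]addr0 hf lin0 addr0. Qed.
Lemma linN x : f (- x) = - f x.
Proof. by rewrite -scaleN1r linZ scaleN1r. Qed.
Lemma linB x y : f (x - y) = f x - f y.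
Proof. by rewrite linD linN. Qed.
Lemma lin_sum (I : Type) (s : seq I) (F : I -> V) : f (\sum_(i <- s) F i) = \sum_(i <- s) f (F i).
Proof. by elim: s => [|x s IH]; rewrite ?big_nil ?lin0 // !big_cons linD IH. Qed.
End Lin.

Section AlgHom.
Variables (k : fieldType) (A B : algType k) (f : A -> B).
Hypothesis hf : alg_hom f.
Lemma ah_lin : lin f. Proof. by case: hf. Qed.
Lemma ah1 : f 1 = 1. Proof. by case: hf => _ []. Qed.
Lemma ahM x y : f (x * y) = f x * f y. Proof. by case: hf => _ []. Qed.
End AlgHom.

Section Tens.
Variables (k : fieldType) (U T : algType k) (i1 i2 : U -> T) (S : U -> U) (adT : U -> T -> U).
Hypothesis HT : is_tensor i1 i2.
Hypothesis HSl : lin S.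
Hypothesis HS1 : S 1 = 1.
Hypothesis HSM : forall x y, S (x * y) = S y * S x.
Hypothesis Had : adT_spec i1 i2 S adT.

Lemma i1_ah : alg_hom i1. Proof. by case: HT. Qed.
Lemma i2_ah : alg_hom i2. Proof. by case: HT => _ []. Qed.
Lemma i12C a b : i1 a * i2 b = i2 b * i1 a. Proof. by case: HT => _ [_ []]. Qed.

Lemma tens_ext (V : lmodType k) (g g' : T -> V) : lin g -> lin g' ->
  (forall a b, g (i1 a * i2 b) = g' (i1 a * i2 b)) -> forall t, g t = g' t.
Proof.
move=> hg hg' H t.
case: HT => _ [_ [_ U4]].
have b1 : forall a x y z, g (i1 (a *: x + y) * i2 z) = a *: g (i1 x * i2 z) + g (i1 y * i2 z).
  move=> a x y z; rewrite (ah_lin i1_ah) mulrDl -scalerAl; exact: hg.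
have b2 : forall a x y z, g (i1 z * i2 (a *: x + y)) = a *: g (i1 z * i2 x) + g (i1 z * i2 y).
  move=> a x y z; rewrite (ah_lin i2_ah) mulrDr -scalerAr; exact: hg.
have [G [G1 G2 G3]] := U4 V (fun a b => g (i1 a * i2 b)) b1 b2.
by rewrite (G3 g hg (fun a b => erefl)) (G3 g' hg' (fun a b => esym (H a b))).
Qed.

Lemma adT_lin u : lin (adT u). Proof. by case: (Had u). Qed.
Lemma adT_pure u a b : adT u (i1 a * i2 b) = a * u * S b. Proof. by case: (Had u). Qed.

Lemma pureM a b c d : i1 a * i2 b * (i1 c * i2 d) = i1 (a * c) * i2 (b * d).
Proof.
by rewrite (ahM i1_ah) (ahM i2_ah) -!mulrA; congr (_ * _); rewrite !mulrA i12C.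
Qed.

Lemma adT_linu a u u' t : adT (a *: u + u') t = a *: adT u t + adT u' t.
Proof.
apply: (tens_ext (g := adT (a *: u + u')) (g' := fun t => a *: adT u t + adT u' t)) => //.
- exact: adT_lin.
- move=> b x y; rewrite !(linD (adT_lin _)) !(linZ (adT_lin _)).
  by rewrite scalerDr !scalerA mulrC; lincomb k.
- move=> x y; rewrite !adT_pure mulrDr mulrDl -scalerAr -scalerAl.
  by [].
Qed.

Lemma adT_1 u : adT u 1 = u.
Proof. have -> : (1:T) = i1 1 * i2 1 by rewrite (ah1 i1_ah) (ah1 i2_ah) mulr1.
by rewrite adT_pure HS1 mulr1 mul1r. Qed.

Lemma adT_comp u t t' : adT (adT u t') t = adT u (t * t').
Proof.
have Hlin : forall t', lin (fun t => adT u (t * t')).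
  by move=> t0 a x y /=; rewrite mulrDl -scalerAl (adT_lin u).
have pure_t' : forall c d t, adT (adT u (i1 c * i2 d)) t = adT u (t * (i1 c * i2 d)).
  move=> c d; apply: tens_ext; [exact: adT_lin | exact: Hlin | ].
  by move=> a b; rewrite pureM !adT_pure HSM !mulrA.
move: t'; apply: tens_ext => [a x y|a x y|c d]; last exact: pure_t'.
  by rewrite (adT_lin u) adT_linu.
by rewrite mulrDr -scalerAr (adT_lin u).
Qed.

End Tens.

Section Lat.
Variable m : nat.
Implicit Types x y : QA m.

Lemma latofK (v : 'rV[int]_m.+1) : \sum_i v ord0 i == 0 -> val (latof v) = v.
Proof. by move=> H; rewrite /latof insubdK. Qed.

Lemma sumQA x : \sum_i val x ord0 i = 0.
Proof. by apply/eqP; case: x. Qed.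

Lemma val_latopp x : val (latopp x) = - val x.
Proof.
rewrite /latopp latofK //.
rewrite (eq_bigr (fun i => - val x ord0 i)); last by move=> i _; rewrite mxE.
by rewrite sumrN sumQA oppr0.
Qed.

Lemma val_latadd x y : val (latadd x y) = val x + val y.
Proof.
rewrite /latadd latofK //.
rewrite (eq_bigr (fun i => val x ord0 i + val y ord0 i)); last by move=> i _; rewrite mxE.
by rewrite big_split /= !sumQA addr0.
Qed.

Lemma latadd_opp x : latadd x (latopp x) = lat0 m.
Proof. by apply: val_inj; rewrite val_latadd val_latopp subrr. Qed.
Lemma latopp_add x : latadd (latopp x) x = lat0 m.
Proof. by apply: val_inj; rewrite val_latadd val_latopp addNr. Qed.
Lemma lataddC x y : latadd x y = latadd y x.
Proof. by apply: val_inj; rewrite !val_latadd addrC. Qed.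

Lemma lpair_oppl x y : lpair (latopp x) y = - lpair x y.
Proof.
rewrite /lpair -sumrN; apply: eq_bigr => i _.
by rewrite val_latopp mxE mulNr.
Qed.

Lemma sum_delta (a : 'I_m.+1) (f : 'I_m.+1 -> int) :
  \sum_r f r * (r == a)%:R = f a.
Proof.
rewrite (bigD1 a) //= eqxx mulr1 big1 ?addr0 // => r /negbTE ->.
by rewrite mulr0.
Qed.

Lemma val_alpha (i : 'I_m) (r : 'I_m.+1) :
  val (alpha i) ord0 r = (r == widen_ord (leqnSn m) i)%:R - (r == lift ord0 i)%:R.
Proof.
rewrite /alpha latofK; first by rewrite !mxE /= !(eq_sym r).
rewrite (eq_bigr (fun r => 1 * (r == widen_ord (leqnSn m) i)%:R - 1 * (r == lift ord0 i)%:R)).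
  by rewrite sumrB !sum_delta subrr.
by move=> r0 _; rewrite !mxE /= !mul1r !(eq_sym r0).
Qed.

Lemma lpair_alpha x (i : 'I_m) :
  lpair x (alpha i) = val x ord0 (widen_ord (leqnSn m) i) - val x ord0 (lift ord0 i).
Proof.
rewrite /lpair (eq_bigr (fun r => val x ord0 r * (r == widen_ord (leqnSn m) i)%:R
   - val x ord0 r * (r == lift ord0 i)%:R)).
  by rewrite sumrB !sum_delta.
by move=> r _; rewrite val_alpha mulrBr.
Qed.

Lemma lpair_aa (i j : 'I_m) : lpair (alpha i) (alpha j) =
  if i == j then 2 else if ((j : nat) == i.+1) || ((i : nat) == j.+1) then -1 else 0.
Proof.
rewrite lpair_alpha !val_alpha.
rewrite -!val_eqE /= /bump /= !add1n.
case: (eqVneq (i:nat) j) => [ij|nij].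
  by rewrite ij eqxx (gtn_eqF (ltnSn j)) (ltn_eqF (ltnSn j)).
rewrite eqSS (eq_sym (j:nat) i) (negbTE nij) /=.
case: ((j:nat) =P i.+1) => [->|_]; first by rewrite (gtn_eqF (leqnSn i.+1)).
by case: ((j.+1:nat) =P i) => [<-|/eqP ne]; rewrite ?eqxx /= // eq_sym (negbTE ne).
Qed.

End Lat.

Section Span.
Variables (k : fieldType) (V : lmodType k).
Inductive span (P : V -> Prop) : V -> Prop :=
| sp0 : span P 0
| spA a t u : P t -> span P u -> span P (a *: t + u).

Lemma span_gen (P : V -> Prop) t : P t -> span P t.
Proof. by move=> h; rewrite -[t]scale1r -[_ *: t]addr0; apply: spA => //; apply: sp0. Qed.

Lemma span_add (P : V -> Prop) t u : span P t -> span P u -> span P (t + u).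
Proof. by elim=> [|a x y hx _ IH] hu; rewrite ?add0r // -addrA; apply: spA => //; apply: IH. Qed.

Lemma span_scale (P : V -> Prop) a t : span P t -> span P (a *: t).
Proof. by elim=> [|b x y hx _ IH]; rewrite ?scaler0; [apply: sp0|rewrite scalerDr scalerA; apply: spA]. Qed.

Lemma span_mono (P Q : V -> Prop) t : (forall x, P x -> Q x) -> span P t -> span Q t.
Proof. by move=> H; elim=> [|a x y hx _ IH]; [apply: sp0|apply: spA => //; apply: H]. Qed.

Lemma span_ext (W : lmodType k) (P : V -> Prop) (f g : V -> W) : lin f -> lin g ->
  (forall x, P x -> f x = g x) -> forall t, span P t -> f t = g t.
Proof.
move=> hf hg H t; elim=> [|a x y hx _ IH]; first by rewrite (lin0 hf) (lin0 hg).
by rewrite hf hg H // IH.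
Qed.

Lemma span_span (P : V -> Prop) t : span (span P) t -> span P t.
Proof. by elim=> [|a x y hx _ IH]; [apply: sp0|apply: span_add => //; apply: span_scale]. Qed.
End Span.

Lemma span_map (k : fieldType) (V W : lmodType k) (P : V -> Prop) (Q : W -> Prop) (f : V -> W) :
  lin f -> (forall x, P x -> span Q (f x)) -> forall t, span P t -> span Q (f t).
Proof.
move=> hf H t; elim=> [|a x y hx _ IH]; first by rewrite (lin0 hf); apply: sp0.
by rewrite hf; apply: span_add => //; apply: span_scale; apply: H.
Qed.

Lemma span_mul (k : fieldType) (A : algType k) (P Q R : A -> Prop) :
  (forall x y, P x -> Q y -> span R (x * y)) ->
  forall x y, span P x -> span Q y -> span R (x * y).
Proof.
move=> H x y hx hy; move: x hx; apply: span_map.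
  by move=> a u v; rewrite mulrDl -scalerAl.
move=> x px; move: y hy; apply: span_map; first by move=> a u v; rewrite mulrDr -scalerAr.
by move=> y0 qy; apply: H.
Qed.

Section Main.
Variables (k : closedFieldType) (q : k) (m : nat) (U T : algType k)
    (E F : 'I_m -> U) (K : QA m -> U) (i1 i2 : U -> T) (Delta : U -> T)
    (S : U -> U) (eps : U -> k) (Tl : 'I_m -> U -> U) (pi : U -> U)
    (adT : U -> T -> U).
Hypotheses (hq : q != 0) (hqn : forall n : nat, (0 < n)%N -> q ^+ n != 1) (hm : (1 < m)%N)
  (HU : is_Uq q E F K) (HT : is_tensor i1 i2) (HD : Uq_coproduct E F K i1 i2 Delta)
  (HS : Uq_antipode E K S) (He : Uq_counit E K eps) (HL : lusztig q E F K Tl)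
  (Hpi : piA_spec E K pi) (Had : adT_spec i1 i2 S adT).

Lemma K0 : K (lat0 m) = 1. Proof. by case: HU => [[]]. Qed.
Lemma KK mu la : K mu * K la = K (latadd mu la). Proof. by case: HU => [[_ []]]. Qed.
Lemma KE mu i : K mu * E i = q ^ lpair mu (alpha i) *: (E i * K mu).
Proof. by case: HU => [[_ [_ []]]]. Qed.
Lemma Ecomm i j : (lpair (alpha i) (alpha j) == 0) || (lpair (alpha i) (alpha j) == 2) ->
  E i * E j = E j * E i.
Proof. by case: HU => [[_ [_ [_ [_ [H _]]]]]] _ h; case: (H i j h). Qed.
Lemma Eserre i j : lpair (alpha i) (alpha j) = -1 ->
  E i * qbr q (E i) (E j) = q *: (qbr q (E i) (E j) * E i).
Proof. by case: HU => [[_ [_ [_ [_ [_ [H _]]]]]]] _ h; case: (H i j h). Qed.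

Lemma KKinv mu : K mu * K (latopp mu) = 1. Proof. by rewrite KK latadd_opp K0. Qed.
Lemma KinvK mu : K (latopp mu) * K mu = 1. Proof. by rewrite KK latopp_add K0. Qed.

Definition cj mu (x : U) := K mu * x * K (latopp mu).
Lemma cj_mul mu x y : cj mu (x * y) = cj mu x * cj mu y.
Proof. by rewrite /cj !mulrA -(mulrA _ (K (latopp mu))) KinvK mulr1. Qed.
Lemma cj_lin mu : lin (cj mu).
Proof. by move=> a x y; rewrite /cj mulrDr mulrDl -scalerAr -scalerAl. Qed.
Lemma cj_1 mu : cj mu 1 = 1. Proof. by rewrite /cj mulr1 KKinv. Qed.
Lemma cj_E mu i : cj mu (E i) = q ^ lpair mu (alpha i) *: E i.
Proof. by rewrite /cj KE -scalerAl -mulrA KKinv mulr1. Qed.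

Lemma D_ah : alg_hom Delta. Proof. by case: HD. Qed.
Lemma D_E i : Delta (E i) = i1 (K (latopp (alpha i))) * i2 (E i) + i1 (E i).
Proof. by case: HD => _ []. Qed.
Lemma D_K mu : Delta (K mu) = i1 (K mu) * i2 (K mu). Proof. by case: HD => _ [_ []]. Qed.
Lemma S_lin : lin S. Proof. by case: HS. Qed.
Lemma S_1 : S 1 = 1. Proof. by case: HS => _ []. Qed.
Lemma S_M x y : S (x * y) = S y * S x. Proof. by case: HS => _ [_ []]. Qed.
Lemma S_E i : S (E i) = - (K (alpha i) * E i). Proof. by case: HS => _ [_ [_ []]]. Qed.
Lemma S_K mu : S (K mu) = K (latopp mu). Proof. by case: HS => _ [_ [_ []]]. Qed.

Definition ad h u := adT u (Delta h).

Lemma i1_1 : i1 1 = 1. Proof. exact: (ah1 (i1_ah HT)). Qed.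
Lemma i2_1 : i2 1 = 1. Proof. exact: (ah1 (i2_ah HT)). Qed.

Lemma ad_E i u : ad (E i) u = E i * u - K (latopp (alpha i)) * u * K (alpha i) * E i.
Proof.
rewrite /ad D_E (linD (adT_lin Had u)) (adT_pure Had).
rewrite -[i1 (E i)]mulr1 -i2_1 (adT_pure Had) S_1 mulr1 S_E addrC mulrN !mulrA.
by [].
Qed.
Lemma ad_K mu u : ad (K mu) u = cj mu u.
Proof. by rewrite /ad D_K (adT_pure Had) S_K. Qed.
Lemma ad_1 u : ad 1 u = u.
Proof. by rewrite /ad (ah1 D_ah) (adT_1 HT S_1 Had). Qed.
Lemma ad_mul h h' u : ad (h * h') u = ad h (ad h' u).
Proof. by rewrite /ad (ahM D_ah) (adT_comp HT S_M Had). Qed.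
Lemma ad_linh a h h' u : ad (a *: h + h') u = a *: ad h u + ad h' u.
Proof. by rewrite /ad (ah_lin D_ah) (adT_lin Had). Qed.
Lemma ad_linu h : lin (ad h).
Proof. by move=> a x y; rewrite /ad (adT_linu HT Had). Qed.

Definition o0 : 'I_m := Ordinal (ltnW hm).
Definition ord_of n : 'I_m := insubd o0 n.
Lemma val_ord_of n : (n < m)%N -> val (ord_of n) = n.
Proof. by move=> h; rewrite /ord_of val_insubd h. Qed.
Lemma ord_of_val (i : 'I_m) : ord_of i = i.
Proof. by apply: val_inj; rewrite val_ord_of. Qed.
Definition En n := E (ord_of n).
Fixpoint zn n := match n with 0 => En 0 | n'.+1 => qbr q (zn n') (En n'.+1) end.

Lemma lpair_ord i j : (i < m)%N -> (j < m)%N -> lpair (alpha (ord_of i)) (alpha (ord_of j)) =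
  if i == j then 2 else if (j == i.+1) || (i == j.+1) then -1 else 0.
Proof.
move=> hi hj; rewrite lpair_aa -val_eqE !val_ord_of //.
Qed.

Definition FT n x := foldr (fun i x => Tl i x) x [seq i <- enum 'I_m | (val i < n)%N].

Lemma iota_filter n p : (n <= p)%N -> [seq x <- iota 0 p | (x < n)%N] = iota 0 n.
Proof.
move=> h; rewrite -(subnKC h) iotaD filter_cat add0n.
rewrite (eq_in_filter (a2 := pred0) (s := iota n (p - n))); last first.
  by move=> x; rewrite mem_iota => /andP [h1 _] /=; rewrite ltnNge h1.
rewrite filter_pred0 cats0; apply/all_filterP/allP => x.
by rewrite mem_iota add0n => /andP [].
Qed.

Lemma filter_step n : (n < m)%N ->
  [seq i <- enum 'I_m | (val i < n.+1)%N] = rcons [seq i <- enum 'I_m | (val i < n)%N] (ord_of n).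
Proof.
move=> h; apply: (inj_map val_inj); rewrite map_rcons val_ord_of //.
rewrite -!(filter_map val (fun x => (x < _)%N)) val_enum_ord.
by rewrite !iota_filter // ?(ltnW h) // -addn1 iotaD cats1.
Qed.

Lemma FT0 x : FT 0 x = x.
Proof.
rewrite /FT (eq_filter (a2 := pred0)) ?filter_pred0 //.
Qed.

Lemma FT_step n x : (n < m)%N -> FT n.+1 x = FT n (Tl (ord_of n) x).
Proof. by move=> h; rewrite /FT filter_step // foldr_rcons. Qed.

Lemma Tl_ah i : alg_hom (Tl i). Proof. by case: (HL i). Qed.

Lemma foldr_mul (s : seq 'I_m) x y : foldr (fun i x => Tl i x) (x * y) s =
  foldr (fun i x => Tl i x) x s * foldr (fun i x => Tl i x) y s.
Proof. by elim: s => [|i s IH] //=; rewrite IH (ahM (Tl_ah i)). Qed.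
Lemma foldr_lin (s : seq 'I_m) : lin (fun x => foldr (fun i x => Tl i x) x s).
Proof. by elim: s => [|i s IH] a x y //=; rewrite IH (ah_lin (Tl_ah i)). Qed.

Lemma FT_mul n x y : FT n (x * y) = FT n x * FT n y. Proof. exact: foldr_mul. Qed.
Lemma FT_lin n : lin (FT n). Proof. exact: foldr_lin. Qed.

Lemma Tl_E0 i j : lpair (alpha i) (alpha j) = 0 -> Tl i (E j) = E j.
Proof. by case: (HL i) => _ [_ [_ [H _]]]; apply: H. Qed.
Lemma Tl_E1 i j : lpair (alpha i) (alpha j) = -1 -> Tl i (E j) = E i * E j - q^-1 *: (E j * E i).
Proof. by case: (HL i) => _ [_ [_ [_ H]]]; apply: H. Qed.

Lemma FT_E n j : (n < j)%N -> (j < m)%N -> FT n (En j) = En j.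
Proof.
elim: n => [|n IH] h hj; first by rewrite FT0.
have hn : (n < m)%N by apply: ltn_trans hj; apply: ltnW.
rewrite FT_step // /En Tl_E0.
  by rewrite -/(En j) IH //; apply: ltnW.
rewrite lpair_ord //.
by rewrite (ltn_eqF (ltnW h)) (gtn_eqF h) (ltn_eqF (ltnW (ltnW h) : (n < j.+1)%N)).
Qed.

Lemma zgen_zn (j : 'I_m) : zgen E Tl j = zn j.
Proof.
have -> : zgen E Tl j = FT j (En j) by rewrite /En ord_of_val.
case: j => n /= hn.
elim: n hn => [|n IH] hn; first by rewrite FT0.
rewrite FT_step ?(ltnW hn) // /En Tl_E1; last first.
  by rewrite lpair_ord ?(ltnW hn) // (ltn_eqF (ltnSn n)) eqxx.
rewrite -/(En n) -/(En n.+1) (linB (FT_lin n)) (linZ (FT_lin n)) !FT_mul IH; last by apply: ltnW.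
by rewrite FT_E.
Qed.

Lemma iag0 (A : algType k) (G : A -> Prop) : in_alg_gen G 0.
Proof. by rewrite -(addNr (1:A)) -scaleN1r; apply: iag_lin; apply: iag_one. Qed.
Lemma iagD (A : algType k) (G : A -> Prop) x y : in_alg_gen G x -> in_alg_gen G y -> in_alg_gen G (x + y).
Proof. by move=> hx hy; rewrite -[x]scale1r; apply: iag_lin. Qed.
Lemma iagZ (A : algType k) (G : A -> Prop) a x : in_alg_gen G x -> in_alg_gen G (a *: x).
Proof. by move=> hx; rewrite -[_ *: _]addr0; apply: iag_lin => //; apply: iag0. Qed.
Lemma iagB (A : algType k) (G : A -> Prop) x y : in_alg_gen G x -> in_alg_gen G y -> in_alg_gen G (x - y).
Proof. by move=> hx hy; apply: iagD => //; rewrite -scaleN1r; apply: iagZ. Qed.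

Lemma iag_comm (A : algType k) (G : A -> Prop) (y x : A) : (forall g, G g -> y * g = g * y) ->
  in_alg_gen G x -> y * x = x * y.
Proof.
move=> H; elim => [g /H //| |a u v _ IH1 _ IH2|u v _ IH1 _ IH2].
- by rewrite mulr1 mul1r.
- by rewrite mulrDr mulrDl -scalerAr -scalerAl IH1 IH2.
- by rewrite mulrA IH1 -mulrA IH2 mulrA.
Qed.

Lemma Ucm_zn j : (j < m)%N -> Ucm E Tl (zn j).
Proof. by move=> h; apply: iag_gen; exists (ord_of j); rewrite zgen_zn val_ord_of. Qed.

Lemma qbr_scale (a b : k) (x y : U) : qbr q (a *: x) (b *: y) = (a * b) *: qbr q x y.
Proof.
by rewrite /qbr -!scalerAl -!scalerAr !scalerA; lincomb k.
Qed.

Lemma cj_qbr mu x y : cj mu (qbr q x y) = qbr q (cj mu x) (cj mu y).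
Proof. by rewrite /qbr (linB (cj_lin mu)) (linZ (cj_lin mu)) !cj_mul. Qed.

Lemma cj_zn mu j : exists s, cj mu (zn j) = s *: zn j.
Proof.
elim: j => [|j [s IH]] /=; first by eexists; rewrite /En cj_E.
by eexists; rewrite cj_qbr IH /En cj_E qbr_scale.
Qed.

Lemma he : q + q^-1 != 0.
Proof.
apply/negP => /eqP h.
have h2 : q ^+ 2 = -1.
  have : q * (q + q^-1) = 0 by rewrite h mulr0.
  by rewrite mulrDr mulfV // expr2 => /eqP; rewrite addr_eq0 => /eqP.
have := hqn (n:=4) isT; rewrite (_ : 4%N = (2 * 2)%N) // exprM h2.
by rewrite expr2 mulrNN mulr1 eqxx.
Qed.

Lemma comm_qbr (y a b : U) : y * a = a * y -> y * b = b * y -> y * qbr q a b = qbr q a b * y.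
Proof.
move=> h1 h2; rewrite /qbr mulrBr mulrBl -scalerAr -scalerAl.
by rewrite !mulrA h1 -!mulrA h2 !mulrA h2 -!mulrA h1.
Qed.

Lemma En_comm i j : (i < m)%N -> (j < m)%N -> i != j -> j != i.+1 -> i != j.+1 ->
  En i * En j = En j * En i.
Proof.
move=> hi hj h1 h2 h3; apply: Ecomm.
by rewrite lpair_ord // (negbTE h1) (negbTE h2) (negbTE h3).
Qed.

Lemma En_RS i j : (i < m)%N -> (j < m)%N -> (j == i.+1) || (i == j.+1) -> RS q (En i) (En j).
Proof.
move=> hi hj h; apply: (RS_of_serre hq); apply: Eserre.
rewrite lpair_ord // h; case: eqP => // e.
by move: h; rewrite e (ltn_eqF (ltnSn j)).
Qed.

Lemma Ez_far i j : (j.+2 <= i)%N -> (i < m)%N -> En i * zn j = zn j * En i.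
Proof.
elim: j => [|j IH] h hi /=.
  by apply: En_comm; lia.
apply: comm_qbr; first by apply: IH; lia.
by apply: En_comm; lia.
Qed.

Lemma En_RSz j : (j.+1 < m)%N -> RS q (En j.+1) (zn j).
Proof.
case: j => [|j] h /=; first by apply: En_RS => //; exact: ltn_trans h.
apply: RS_qb; first by apply: Ez_far.
apply: En_RS => //; first exact: ltn_trans h.
by rewrite eqxx orbT.
Qed.

Lemma Ez_c j : (j.+1 < m)%N -> En j.+1 * zn j.+1 = q^-1 *: (zn j.+1 * En j.+1).
Proof. by move=> h /=; apply: (RS_c hq); apply: En_RSz. Qed.

Lemma Ez_mid i j : (0 < i)%N -> (i < j)%N -> (j < m)%N -> En i * zn j = zn j * En i.
Proof.
move=> i0; elim: j => [//|j IH] h hj.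
have hj' : (j < m)%N by lia.
case: (eqVneq i j) => [ei|nij].
- subst i; case: j IH i0 hj hj' h => [//|j] _ _ hj hj' _ /=.
  apply: (key_d hq he).
  + by apply/esym/Ez_far; lia.
  + by apply: En_RS; rewrite ?eqxx //; lia.
  + exact: En_RSz.
- apply: comm_qbr; first by apply: IH; lia.
  by apply: En_comm; lia.
Qed.

Ltac decide_nat_eqs :=
  repeat match goal with
  | |- context [@eq_op ?T ?a ?b] =>
      let TT := eval hnf in (Equality.sort T) in
      lazymatch TT with nat =>
      first [ rewrite (_ : (a == b) = true); last (apply/eqP; lia)
            | rewrite (_ : (a == b) = false); last (apply/eqP; lia) ] end
  end.

Lemma latoppK (mu : QA m) : latopp (latopp mu) = mu.
Proof. by apply: val_inj; rewrite !val_latopp opprK. Qed.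

Definition sig_ij (i j : nat) : k := if i == j then q^-1 else if i == j.+1 then q else 1.

Lemma cjz i j : (0 < i < m)%N -> (j < m)%N ->
  cj (latopp (alpha (ord_of i))) (zn j) = sig_ij i j *: zn j.
Proof.
move=> /andP [i0 im]; elim: j => [|j IH] hj /=.
  rewrite /En cj_E lpair_oppl lpair_ord // /sig_ij.
  case: (eqVneq i 1) => [->|ne1] /=; first by rewrite opprK expr1z.
  by decide_nat_eqs; rewrite oppr0 expr0z.
rewrite cj_qbr IH; last lia.
rewrite /En cj_E lpair_oppl lpair_ord // qbr_scale; congr (_ *: _).
rewrite /sig_ij.
case: (eqVneq i j) => [->|nij].
  by decide_nat_eqs; rewrite opprK expr1z mulVf.
destruct (eqVneq i j.+1) as [e|nij1]; [subst i|].
  by decide_nat_eqs; rewrite -exprnN expr2 invfM mulrA mulfV // mul1r.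
destruct (eqVneq i j.+2) as [e|nij2]; [subst i|].
  by decide_nat_eqs; rewrite opprK expr1z mul1r.
by decide_nat_eqs; rewrite oppr0 expr0z mulr1.
Qed.

Lemma ad_E' i u : ad (E i) u = E i * u - cj (latopp (alpha i)) u * E i.
Proof. by rewrite ad_E /cj latoppK. Qed.

Lemma adE_zn i j : (0 < i < m)%N -> (j < m)%N -> Ucm E Tl (ad (En i) (zn j)).
Proof.
move=> hi hj; rewrite /En ad_E' -/(En i) cjz // /sig_ij.
destruct (eqVneq i j) as [e|nij]; [subst i|].
  case: j hi hj => [|j] hi hj; first by move: hi; rewrite ltnn.
  rewrite Ez_c // -scalerAl subrr; exact: iag0.
destruct (eqVneq i j.+1) as [e|nij1]; [subst i|].
  have -> : En j.+1 * zn j - q *: zn j * En j.+1 = (- q) *: zn j.+1.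
    rewrite /= /qbr -scalerAl; lincomb k; field; exact: hq.
  by apply: iagZ; apply: Ucm_zn; case/andP: hi.
rewrite scale1r.
case: (ltnP i j) => h.
  rewrite Ez_mid //; [rewrite subrr; exact: iag0| by case/andP: hi].
rewrite Ez_far ?subrr; [exact: iag0| lia | by case/andP: hi].
Qed.

Lemma cj_Ucm mu v : Ucm E Tl v -> Ucm E Tl (cj mu v).
Proof.
elim => [g [j ->]| |a x y _ IH1 _ IH2|x y _ IH1 _ IH2].
- by rewrite zgen_zn; case: (cj_zn mu j) => s ->; apply: iagZ; apply: Ucm_zn.
- by rewrite cj_1; apply: iag_one.
- by rewrite (cj_lin mu); apply: iag_lin.
- by rewrite cj_mul; apply: iag_mul.
Qed.

Lemma adE_mul i x y : ad (E i) (x * y) = cj (latopp (alpha i)) x * ad (E i) y + ad (E i) x * y.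
Proof.
rewrite !ad_E' /cj latoppK.
have hK u : u * K (alpha i) * K (latopp (alpha i)) = u by rewrite -mulrA KKinv mulr1.
rewrite !mulrBr !mulrBl !mulrA hK; lincomb k.
Qed.

Lemma adE_Ucm i v : (0 < i < m)%N -> Ucm E Tl v -> Ucm E Tl (ad (En i) v).
Proof.
move=> hi; elim => [g [j ->]| |a x y _ IH1 _ IH2|x y hx IH1 hy IH2].
- rewrite zgen_zn; apply: adE_zn => //; by case: j.
- by rewrite /En ad_E' cj_1 mulr1 mul1r subrr; apply: iag0.
- by rewrite (ad_linu _); apply: iag_lin.
- rewrite /En adE_mul -/(En i); apply: iagD; apply: iag_mul => //.
  exact: cj_Ucm.
Qed.

Definition Upos := in_alg_gen (fun x : U => (exists i : 'I_m, (0 < val i)%N /\ x = E i) \/ (exists mu, x = K mu)).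

Lemma pi_lin x y a : Uge0 E K x -> Uge0 E K y -> pi (a *: x + y) = a *: pi x + pi y.
Proof. by case: Hpi => H _; apply: H. Qed.
Lemma pi_mul x y : Uge0 E K x -> Uge0 E K y -> pi (x * y) = pi x * pi y.
Proof. by case: Hpi => _ [H _]; apply: H. Qed.
Lemma pi_1 : pi 1 = 1. Proof. by case: Hpi => _ [_ []]. Qed.
Lemma pi_E i : pi (E i) = if val i == 0%N then 0 else E i. Proof. by case: Hpi => _ [_ [_ []]]. Qed.
Lemma pi_K mu : pi (K mu) = K mu. Proof. by case: Hpi => _ [_ [_ []]]. Qed.

Lemma pi_Upos h : Uge0 E K h -> Upos (pi h).
Proof.
elim => [g [[i ->]|[mu ->]]| |a x y hx IH1 hy IH2|x y hx IH1 hy IH2].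
- rewrite pi_E; case: eqP => [_|/eqP ne]; first exact: iag0.
  by apply: iag_gen; left; exists i; split => //; rewrite lt0n.
- by rewrite pi_K; apply: iag_gen; right; exists mu.
- by rewrite pi_1; apply: iag_one.
- by rewrite pi_lin //; apply: iag_lin.
- by rewrite pi_mul //; apply: iag_mul.
Qed.

Lemma Upos_Uge0 x : Upos x -> Uge0 E K x.
Proof.
elim => [g [[i [_ ->]]|[mu ->]]| |a u v _ IH1 _ IH2|u v _ IH1 _ IH2].
- by apply: iag_gen; left; exists i.
- by apply: iag_gen; right; exists mu.
- exact: iag_one.
- exact: iag_lin.
- exact: iag_mul.
Qed.

Lemma ad_Upos x v : Upos x -> Ucm E Tl v -> Ucm E Tl (ad x v).
Proof.
move=> hx; elim: hx v => [g [[i [hi ->]]|[mu ->]]| |a u w _ IH1 _ IH2|u w _ IH1 _ IH2] v hv.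
- rewrite -(ord_of_val i) -/(En i); apply: adE_Ucm => //.
  by rewrite hi /=; case: i hi.
- by rewrite ad_K; apply: cj_Ucm.
- by rewrite ad_1.
- by rewrite ad_linh; apply: iag_lin; [apply: IH1|apply: IH2].
- by rewrite ad_mul; apply: IH1; apply: IH2.
Qed.

Lemma eps_lin a x y : eps (a *: x + y) = a * eps x + eps y. Proof. by case: He. Qed.
Lemma eps_1 : eps 1 = 1. Proof. by case: He => _ []. Qed.
Lemma eps_M x y : eps (x * y) = eps x * eps y. Proof. by case: He => _ [_ []]. Qed.
Lemma eps_E i : eps (E i) = 0. Proof. by case: He => _ [_ [_ []]]. Qed.
Lemma eps_K mu : eps (K mu) = 1. Proof. by case: He => _ [_ [_ []]]. Qed.
Lemma eps_0 : eps 0 = 0.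
Proof. by have := eps_lin 1 0 0; rewrite scaler0 addr0 mul1r => H; apply: (addrI (eps 0)); rewrite addr0 -H. Qed.

Lemma ad_one x : Uge0 E K x -> ad x 1 = eps x *: 1.
Proof.
elim => [g [[i ->]|[mu ->]]| |a u w _ IH1 _ IH2|u w _ IH1 _ IH2].
- by rewrite ad_E' cj_1 mulr1 mul1r subrr eps_E scale0r.
- by rewrite ad_K cj_1 eps_K scale1r.
- by rewrite ad_1 eps_1 scale1r.
- by rewrite ad_linh IH1 IH2 eps_lin scalerA scalerDl.
- by rewrite ad_mul IH2 (linZ (ad_linu u)) IH1 scalerA eps_M mulrC.
Qed.

Lemma eps_pi h : Uge0 E K h -> eps (pi h) = eps h.
Proof.
elim => [g [[i ->]|[mu ->]]| |a u w hu IH1 hw IH2|u w hu IH1 hw IH2].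
- by rewrite pi_E eps_E; case: eqP => _; rewrite ?eps_0 ?eps_E.
- by rewrite pi_K.
- by rewrite pi_1.
- by rewrite pi_lin // !eps_lin IH1 IH2.
- by rewrite pi_mul // !eps_M IH1 IH2.
Qed.

Lemma Gex v w : exists G : T -> U, lin G /\ forall a b, G (i1 a * i2 b) = ad a v * ad b w.
Proof.
case: HT => _ [_ [_ U4]].
have b1 : forall a x y z, ad (a *: x + y) v * ad z w = a *: (ad x v * ad z w) + ad y v * ad z w.
  by move=> a x y z; rewrite ad_linh mulrDl -scalerAl.
have b2 : forall a x y z, ad z v * ad (a *: x + y) w = a *: (ad z v * ad x w) + ad z v * ad y w.
  by move=> a x y z; rewrite ad_linh mulrDr -scalerAr.
have [G [G1 G2 _]] := U4 U (fun a b => ad a v * ad b w) b1 b2.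
by exists G.
Qed.

Lemma D_lin : lin Delta. Proof. exact: (ah_lin D_ah). Qed.

Lemma ad_prod x : Uge0 E K x -> forall v w (G : T -> U), lin G ->
  (forall a b, G (i1 a * i2 b) = ad a v * ad b w) -> ad x (v * w) = G (Delta x).
Proof.
elim => [g [[i ->]|[mu ->]]| |a u u' _ IH1 _ IH2|u u' _ IH1 _ IH2] v w G hG HG.
- rewrite D_E (linD hG) HG -[i1 (E i)]mulr1 -i2_1 HG ad_1 ad_K.
  by rewrite adE_mul.
- by rewrite D_K HG !ad_K cj_mul.
- by rewrite (ah1 D_ah) -[1 in RHS]mulr1 -{1}i1_1 -i2_1 HG !ad_1.
- by rewrite ad_linh D_lin hG (IH1 _ _ G) ?(IH2 _ _ G).
- rewrite ad_mul (IH2 _ _ G) // (ahM D_ah).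
  have key : forall t, ad u (G t) = G (Delta u * t).
    apply: (tens_ext HT).
    + by move=> a0 x0 y0; rewrite (linD hG) (linZ hG) (ad_linu u).
    + by move=> a0 x0 y0; rewrite mulrDr -scalerAr hG.
    + move=> a b; rewrite HG.
      have [G' [hG' HG']] := Gex (ad a v) (ad b w).
      rewrite (IH1 _ _ G') //.
      move: (Delta u); apply: (tens_ext HT) => //.
      * by move=> c x0 y0; rewrite mulrDl -scalerAl hG.
      * by move=> c d; rewrite HG' (pureM HT) HG !ad_mul.
  exact: key.
Qed.

Definition muv : 'rV[int]_m.+1 := \row_r (if r == ord0 then (m:int) else -1).
Lemma muv_sum : \sum_i muv ord0 i == 0.
Proof.
rewrite big_ord_recl !mxE eqxx.
rewrite (eq_bigr (fun _ => -1)); last by move=> i _; rewrite mxE eq_sym (negbTE (neq_lift _ _)).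
by rewrite sumr_const card_ord mulNrn -natz subrr.
Qed.
Definition mu0 : QA m := latof muv.

Lemma lpair_mu0 (l : 'I_m) : lpair mu0 (alpha l) = if val l == 0%N then (m.+1 : int) else 0.
Proof.
rewrite lpair_alpha /mu0 latofK ?muv_sum // !mxE [lift _ _ == _]eq_sym (negbTE (neq_lift _ _)).
rewrite -val_eqE /=; case: eqP => _ /=; last by rewrite subrr.
by rewrite opprK -addn1 PoszD.
Qed.

Definition lam := q ^+ m.+1.
Lemma lamX_neq1 e : (0 < e)%N -> lam ^+ e != 1.
Proof. by move=> he; rewrite /lam -exprM; apply: hqn; rewrite muln_gt0. Qed.

Lemma cj_mu0_E l : cj mu0 (E l) = (if val l == 0%N then lam else 1) *: E l.
Proof. by rewrite cj_E lpair_mu0; case: eqP => _; rewrite ?expr0z. Qed.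
Lemma cj_mu0_K nu : cj mu0 (K nu) = K nu.
Proof. by rewrite /cj KK lataddC -KK -mulrA KKinv mulr1. Qed.

Lemma pi_0 : pi 0 = 0.
Proof.
have := pi_lin 1 (iag0 _) (iag0 _) (x:=0) (y:=0).
rewrite scaler0 addr0 scale1r => H; apply: (addrI (pi 0)); rewrite addr0 -H //.
Qed.
Lemma pi_Z a x : Uge0 E K x -> pi (a *: x) = a *: pi x.
Proof. by move=> hx; rewrite -[a *: x]addr0 pi_lin ?pi_0 ?addr0 //; apply: iag0. Qed.

Definition Hom d x := [/\ Uge0 E K x, cj mu0 x = lam ^+ d *: x & pi x = (if d == 0%N then x else 0)].

Lemma Hom_Z d a x : Hom d x -> Hom d (a *: x).
Proof.
case=> h1 h2 h3; split; first exact: iagZ.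
- by rewrite (linZ (cj_lin mu0)) h2 !scalerA mulrC.
- by rewrite pi_Z // h3; case: eqP => _; rewrite ?scaler0.
Qed.

Lemma Hom_M d e x y : Hom d x -> Hom e y -> Hom (d + e) (x * y).
Proof.
case=> h1 h2 h3 [g1 g2 g3]; split; first exact: iag_mul.
- by rewrite cj_mul h2 g2 -scalerAl -scalerAr scalerA exprD.
- rewrite pi_mul // h3 g3 addn_eq0.
  by case: eqP => _; case: eqP => _ /=; rewrite ?mulr0 ?mul0r.
Qed.

Lemma Hom_1 : Hom 0 1.
Proof. by split; [apply: iag_one | rewrite cj_1 scale1r | rewrite pi_1]. Qed.
Lemma Hom_K nu : Hom 0 (K nu).
Proof.
split; [by apply: iag_gen; right; exists nu | by rewrite cj_mu0_K scale1r | by rewrite pi_K].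
Qed.
Lemma Hom_E l : Hom (if val l == 0%N then 1 else 0) (E l).
Proof.
split; first by apply: iag_gen; left; exists l.
- by rewrite cj_mu0_E; case: eqP => _; rewrite ?expr1 ?expr0.
- by rewrite pi_E; case: eqP.
Qed.

Definition PH d t := exists a b d1 d2, [/\ t = i1 a * i2 b, Hom d1 a, Hom d2 b & (d1 + d2)%N = d].
Definition Good d x := Hom d x /\ span (PH d) (Delta x).

Lemma PH_pure d1 d2 a b : Hom d1 a -> Hom d2 b -> PH (d1 + d2) (i1 a * i2 b).
Proof. by move=> ha hb; exists a, b, d1, d2. Qed.

Lemma Good_Z d a x : Good d x -> Good d (a *: x).
Proof. by case=> h1 h2; split; [apply: Hom_Z | rewrite (linZ D_lin); apply: span_scale]. Qed.

Lemma Good_M d e x y : Good d x -> Good e y -> Good (d + e) (x * y).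
Proof.
case=> h1 h2 [g1 g2]; split; first exact: Hom_M.
rewrite (ahM D_ah); apply: (span_mul _ h2 g2) => t u [a [b [d1 [d2 [-> ha hb hd]]]]].
move=> [c [f [e1 [e2 [-> hc hf he']]]]].
rewrite (pureM HT); apply: span_gen.
have -> : (d + e = (d1 + e1) + (d2 + e2))%N by rewrite -hd -he'; lia.
by apply: PH_pure; apply: Hom_M.
Qed.

Lemma Good_1 : Good 0 1.
Proof.
split; first exact: Hom_1.
rewrite (ah1 D_ah); have -> : (1 : T) = i1 1 * i2 1 by rewrite i1_1 i2_1 mulr1.
apply: span_gen.
by apply: (PH_pure (d1:=0) (d2:=0)); apply: Hom_1.
Qed.
Lemma Good_K nu : Good 0 (K nu).
Proof. by split; [apply: Hom_K | rewrite D_K; apply: span_gen; apply: (PH_pure (d1:=0) (d2:=0)); apply: Hom_K]. Qed.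
Lemma Good_E l : Good (if val l == 0%N then 1 else 0) (E l).
Proof.
split; first exact: Hom_E.
rewrite D_E; apply: span_add; apply: span_gen.
  by rewrite -[X in PH X _]add0n; apply: PH_pure; [apply: Hom_K | apply: Hom_E].
rewrite -[i1 (E l)]mulr1 -i2_1 -[X in PH X _]addn0.
by apply: PH_pure; [apply: Hom_E | apply: Hom_1].
Qed.

Definition Dec D x := span (fun y => exists d, (d <= D)%N /\ Good d y) x.

Lemma Dec_mono D D' x : (D <= D')%N -> Dec D x -> Dec D' x.
Proof. by move=> h; apply: span_mono => y [d [hd g]]; exists d; split => //; apply: leq_trans h. Qed.

Lemma Uge0_Dec x : Uge0 E K x -> exists D, Dec D x.
Proof.
elim => [g [[i ->]|[mu ->]]| |a u w _ [D1 IH1] _ [D2 IH2]|u w _ [D1 IH1] _ [D2 IH2]].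
- by exists 1%N; apply: span_gen; exists (if val i == 0%N then 1%N else 0%N); split; [case: eqP | apply: Good_E].
- by exists 0%N; apply: span_gen; exists 0%N; split => //; apply: Good_K.
- by exists 0%N; apply: span_gen; exists 0%N; split => //; apply: Good_1.
- exists (maxn D1 D2); apply: span_add; first apply: span_scale.
    by apply: Dec_mono IH1; apply: leq_maxl.
  by apply: Dec_mono IH2; apply: leq_maxr.
- exists (D1 + D2)%N; apply: (span_mul _ IH1 IH2) => y z [d [hd gy]] [e [he' gz]].
  apply: span_gen; exists (d + e)%N; split; first exact: leq_add.
  exact: Good_M.
Qed.

Lemma Dec_Uge0 D x : Dec D x -> Uge0 E K x.
Proof. by elim => [|a t u [d [_ [[h _ _] _]]] _ IH]; [apply: iag0 | apply: iag_lin]. Qed.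

Definition rU e x := (1 - lam ^+ e)^-1 *: (cj mu0 x - lam ^+ e *: x).
Fixpoint PP D x := if D is D'.+1 then rU D'.+1 (PP D' x) else x.

Lemma rU_lin e : lin (rU e).
Proof.
move=> a x y; rewrite /rU (cj_lin mu0) scalerDr scalerA.
rewrite !scalerBr !scalerDr !scalerA; lincomb k.
Qed.
Lemma PP_lin D : lin (PP D).
Proof. by elim: D => [|D IH] a x y //=; rewrite IH rU_lin. Qed.

Lemma one_lam_neq0 e : (0 < e)%N -> 1 - lam ^+ e != 0.
Proof. by move=> he; rewrite subr_eq0 eq_sym lamX_neq1. Qed.

Lemma PP_hom D d x : Hom d x -> exists c, PP D x = c *: x /\ (d = 0%N -> c = 1) /\ ((0 < d <= D)%N -> c = 0).
Proof.
case=> h1 h2 h3; elim: D => [|D [c [IH1 [IH2 IH3]]]] /=.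
  by exists 1; rewrite scale1r; split => //; split => // /andP [h h']; move: h'; rewrite leqNgt h.
exists ((1 - lam ^+ D.+1)^-1 * c * (lam ^+ d - lam ^+ D.+1)); split.
  by rewrite IH1 /rU (linZ (cj_lin mu0)) h2 !scalerA; lincomb k.
split.
  move=> d0; rewrite IH2 // d0 expr0 mulr1 mulVf //; exact: one_lam_neq0.
move=> /andP [d0 hd]; rewrite leq_eqVlt in hd; case/orP: hd => [/eqP ->|hd].
  by rewrite subrr mulr0.
by rewrite IH3 ?mulr0 ?mul0r // d0.
Qed.

Lemma PP_pi D d x : Hom d x -> (d <= D)%N -> PP D x = pi x.
Proof.
move=> hx hd; have [c [-> [c1 c2]]] := PP_hom D hx; case: hx => _ _ ->.
case: eqP => [d0|/eqP d0]; first by rewrite c1 // scale1r.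
by rewrite c2 ?scale0r // lt0n d0.
Qed.

Lemma PP_Dec D x : Dec D x -> PP D x = pi x.
Proof.
elim => [|a t u [d [hd [ht _]]] hu IH]; first by rewrite (lin0 (PP_lin D)) pi_0.
rewrite (PP_lin D) (PP_pi ht hd) IH pi_lin //; first by case: ht.
exact: Dec_Uge0 hu.
Qed.

Definition Th1 t := i1 (K mu0) * t * i1 (K (latopp mu0)).
Definition Th2 t := i2 (K mu0) * t * i2 (K (latopp mu0)).
Lemma Th1_pure a b : Th1 (i1 a * i2 b) = i1 (cj mu0 a) * i2 b.
Proof.
rewrite /Th1 /cj !(ahM (i1_ah HT)) -!mulrA; congr (_ * (_ * _)).
by rewrite (i12C HT).
Qed.
Lemma Th2_pure a b : Th2 (i1 a * i2 b) = i1 a * i2 (cj mu0 b).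
Proof.
rewrite /Th2 /cj !(ahM (i2_ah HT)) !mulrA; congr (_ * _ * _).
by rewrite (i12C HT).
Qed.

Definition r1 e t := (1 - lam ^+ e)^-1 *: (Th1 t - lam ^+ e *: t).
Definition r2 e t := (1 - lam ^+ e)^-1 *: (Th2 t - lam ^+ e *: t).
Fixpoint RR1 D t := if D is D'.+1 then r1 D'.+1 (RR1 D' t) else t.
Fixpoint RR2 D t := if D is D'.+1 then r2 D'.+1 (RR2 D' t) else t.

Lemma r1_lin e : lin (r1 e).
Proof. move=> a x y; rewrite /r1 /Th1 mulrDr mulrDl -scalerAr -scalerAl; rewrite !scalerBr !scalerDr !scalerA; lincomb k. Qed.
Lemma r2_lin e : lin (r2 e).
Proof. move=> a x y; rewrite /r2 /Th2 mulrDr mulrDl -scalerAr -scalerAl; rewrite !scalerBr !scalerDr !scalerA; lincomb k. Qed.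
Lemma RR1_lin D : lin (RR1 D). Proof. by elim: D => [|D IH] a x y //=; rewrite IH r1_lin. Qed.
Lemma RR2_lin D : lin (RR2 D). Proof. by elim: D => [|D IH] a x y //=; rewrite IH r2_lin. Qed.

Lemma i1_lin : lin i1. Proof. exact: (ah_lin (i1_ah HT)). Qed.
Lemma i2_lin : lin i2. Proof. exact: (ah_lin (i2_ah HT)). Qed.

Lemma RR1_pure D a b : RR1 D (i1 a * i2 b) = i1 (PP D a) * i2 b.
Proof.
elim: D => [|D IH] //=; rewrite IH /r1 Th1_pure /rU.
by rewrite (linZ i1_lin) (linB i1_lin) (linZ i1_lin) -!scalerAl mulrBl -scalerAl.
Qed.
Lemma RR2_pure D a b : RR2 D (i1 a * i2 b) = i1 a * i2 (PP D b).
Proof.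
elim: D => [|D IH] //=; rewrite IH /r2 Th2_pure /rU.
by rewrite (linZ i2_lin) (linB i2_lin) (linZ i2_lin) -!scalerAr mulrBr -scalerAr.
Qed.

Definition QQ D t := RR2 D (RR1 D t).
Lemma QQ_lin D : lin (QQ D). Proof. by move=> a x y; rewrite /QQ (RR1_lin D) (RR2_lin D). Qed.
Lemma QQ_pure D a b : QQ D (i1 a * i2 b) = i1 (PP D a) * i2 (PP D b).
Proof. by rewrite /QQ RR1_pure RR2_pure. Qed.

Lemma QQ_Delta D x : Dec D x -> QQ D (Delta x) = Delta (pi x).
Proof.
elim => [|a t u [d [hd [ht hs]]] hu IH].
  by rewrite (lin0 D_lin) (lin0 (QQ_lin D)) pi_0 (lin0 D_lin).
rewrite D_lin (QQ_lin D) IH pi_lin; last 2 first.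
- by case: ht.
- exact: Dec_Uge0 hu.
rewrite D_lin; congr (_ *: _ + _).
have [_ _ ->] := ht.
have -> : QQ D (Delta t) = (if d == 0%N then Delta t else 0).
  move: (Delta t) hs; apply: span_ext.
  - exact: QQ_lin.
  - by case: eqP => _ a0 x0 y0; rewrite ?scaler0 ?addr0.
  move=> t0 [a0 [b0 [d1 [d2 [-> ha hb hdd]]]]].
  rewrite QQ_pure (PP_pi ha) ?(PP_pi hb); try lia.
  case: ha => _ _ ->; case: hb => _ _ ->; rewrite -hdd addn_eq0.
  case: eqP => _; case: eqP => _ /=; rewrite ?(lin0 i1_lin) ?(lin0 i2_lin) ?mulr0 ?mul0r //.
by case: eqP => _; rewrite ?(lin0 D_lin).
Qed.

Lemma Dec_list (s : seq (U * U)) : {in s, forall p, Uge0 E K p.1 /\ Uge0 E K p.2} ->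
  exists D, {in s, forall p, Dec D p.1 /\ Dec D p.2}.
Proof.
elim: s => [|p s IH] H; first by exists 0%N.
have [D1 HD1] := IH (fun x hx => H x (@mem_behead _ (p :: s) x hx)).
have [h1 h2] := H p (mem_head _ _).
have [D2 H2] := Uge0_Dec h1; have [D3 H3] := Uge0_Dec h2.
exists (maxn D1 (maxn D2 D3)) => x; rewrite in_cons => /orP [/eqP ->|hx].
  split; [apply: Dec_mono H2 | apply: Dec_mono H3]; lia.
by have [g1 g2] := HD1 x hx; split; [apply: Dec_mono g1 | apply: Dec_mono g2]; lia.
Qed.

Lemma part7 h v w (s : seq (U * U)) : Uge0 E K h ->
  {in s, forall p, Uge0 E K p.1 /\ Uge0 E K p.2} ->
  Delta h = \sum_(p <- s) i1 p.1 * i2 p.2 ->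
  ad (pi h) (v * w) = \sum_(p <- s) ad (pi p.1) v * ad (pi p.2) w.
Proof.
move=> hh hs hD.
have [G [hG HG]] := Gex v w.
rewrite (ad_prod (Upos_Uge0 (pi_Upos hh)) hG HG).
have [D1 H1] := Uge0_Dec hh; have [D2 H2] := Dec_list hs.
set D := maxn D1 D2.
rewrite -(QQ_Delta (D := D)); last by apply: Dec_mono H1; apply: leq_maxl.
rewrite hD (lin_sum (QQ_lin D)) (lin_sum hG) big_seq [RHS]big_seq.
apply: eq_bigr => p hp; rewrite QQ_pure HG.
have [g1 g2] := H2 p hp.
by rewrite !(PP_Dec (D := D)) //; [apply: Dec_mono g2 | apply: Dec_mono g1]; apply: leq_maxr.
Qed.

Lemma fin1 h v : Uge0 E K h -> Ucm E Tl v -> Ucm E Tl (ad (pi h) v).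
Proof. by move=> hh hv; apply: ad_Upos => //; apply: pi_Upos. Qed.
Lemma fin2 a h h' v : Uge0 E K h -> Uge0 E K h' -> Ucm E Tl v ->
  ad (pi (a *: h + h')) v = a *: ad (pi h) v + ad (pi h') v.
Proof. by move=> hh hh' _; rewrite pi_lin // ad_linh. Qed.
Lemma fin3 a h v v' : Uge0 E K h -> Ucm E Tl v -> Ucm E Tl v' ->
  ad (pi h) (a *: v + v') = a *: ad (pi h) v + ad (pi h) v'.
Proof. by move=> _ _ _; rewrite (ad_linu _). Qed.
Lemma fin4 v : Ucm E Tl v -> ad (pi 1) v = v.
Proof. by move=> _; rewrite pi_1 ad_1. Qed.
Lemma fin5 h h' v : Uge0 E K h -> Uge0 E K h' -> Ucm E Tl v ->
  ad (pi (h * h')) v = ad (pi h) (ad (pi h') v).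
Proof. by move=> hh hh' _; rewrite pi_mul // ad_mul. Qed.
Lemma fin6 h : Uge0 E K h -> ad (pi h) 1 = eps h *: 1.
Proof. by move=> hh; rewrite ad_one ?eps_pi //; apply: Upos_Uge0; apply: pi_Upos. Qed.
Lemma fin7 h v w (s : seq (U * U)) : Uge0 E K h -> Ucm E Tl v -> Ucm E Tl w ->
  {in s, forall p, Uge0 E K p.1 /\ Uge0 E K p.2} ->
  Delta h = \sum_(p <- s) i1 p.1 * i2 p.2 ->
  ad (pi h) (v * w) = \sum_(p <- s) ad (pi p.1) v * ad (pi p.2) w.
Proof. by move=> hh _ _; apply: part7. Qed.

End Main.


Theorem corollary6p2 (k : closedFieldType) (q : k) (m : nat) (U T : algType k)
    (E F : 'I_m -> U) (K : QA m -> U) (i1 i2 : U -> T) (Delta : U -> T)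
    (S : U -> U) (eps : U -> k) (Tl : 'I_m -> U -> U) (pi : U -> U)
    (adT : U -> T -> U) :
  [pchar k] =i pred0 ->
  q != 0 -> (forall n : nat, (0 < n)%N -> q ^+ n != 1) ->
  (1 < m)%N ->
  is_Uq q E F K ->
  is_tensor i1 i2 ->
  Uq_coproduct E F K i1 i2 Delta ->
  Uq_antipode E K S ->
  Uq_counit E K eps ->
  lusztig q E F K Tl ->
  piA_spec E K pi ->
  adT_spec i1 i2 S adT ->
  let ad := fun h u => adT u (Delta h) in
  let lam := fun h v => ad (pi h) v in
  (* Im(lambda_A) is contained in U_q^{c_m} *)
  (forall h v, Uge0 E K h -> Ucm E Tl v -> Ucm E Tl (lam h v)) /\
  (* U_q^{c_m} is a left U_A^{>=0}-module algebra via lambda_A *)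
  (forall a h h' v, Uge0 E K h -> Uge0 E K h' -> Ucm E Tl v ->
     lam (a *: h + h') v = a *: lam h v + lam h' v) /\
  (forall a h v v', Uge0 E K h -> Ucm E Tl v -> Ucm E Tl v' ->
     lam h (a *: v + v') = a *: lam h v + lam h v') /\
  (forall v, Ucm E Tl v -> lam 1 v = v) /\
  (forall h h' v, Uge0 E K h -> Uge0 E K h' -> Ucm E Tl v ->
     lam (h * h') v = lam h (lam h' v)) /\
  (forall h, Uge0 E K h -> lam h 1 = eps h *: 1) /\
  (forall h v w (s : seq (U * U)), Uge0 E K h -> Ucm E Tl v -> Ucm E Tl w ->
     {in s, forall p, Uge0 E K p.1 /\ Uge0 E K p.2} ->
     Delta h = \sum_(p <- s) i1 p.1 * i2 p.2 ->
     lam h (v * w) = \sum_(p <- s) lam p.1 v * lam p.2 w).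
Proof.
move=> hc hq hqn hm HU HT HD HS He HL Hpi Had adl laml.
split; first by move=> h v hh hv; eapply fin1; eassumption.
split; first by move=> a h h' v hh hh' hv; eapply fin2; eassumption.
split; first by move=> a h v v' hh hv hv'; eapply fin3; eassumption.
split; first by move=> v hv; eapply fin4; eassumption.
split; first by move=> h h' v hh hh' hv; eapply fin5; eassumption.
split; first by move=> h hh; eapply fin6; eassumption.
by move=> h v w s hh hv hw hs hD; eapply fin7; eassumption.
Qed.
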